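(* Let $R$ be a commutative unital ring, $A$ a unital associative $R$-algebra and $M$ an $(A,A)$-bimodule. Then there are isomorphisms of cochain complexes of $R$-modules \[(C^*_\mu({\tt I}_n;A,M),d)\cong(\widehat C^*_{\rm Chrom}({\tt I}_n;A,M),\widehat{\tt d})\cong(C^*_{\rm Chrom}({\tt I}_n;A,M),{\tt d})\] and \[(C^*_\mu({\tt P}_n;A,M),d)\oplus(M[n+1],0)\cong(\widehat C^*_{\rm Chrom}({\tt P}_n;A,M),\widehat{\tt d}),\] where $(M[n+1],0)$ is the complex consisting of a single copy of $M$ in degree $n+1$.
   Context: ${\tt I}_n$ is the digraph with vertices $v_0,\dots,v_n$ and edges $(v_{i-1},v_i)$, $1\le i\le n$; ${\tt P}_n$ has vertices $v_0,\dots,v_n$ and edges $(v_i,v_{i+1})$, $0\le i<n$, and $(v_n,v_0)$. For ${\tt G}\in\{{\tt I}_n,{\tt P}_n\}$ and a spanning subgraph ${\tt H}$ (all vertices, subset of edges) with connected components $c_0<\dots<c_k$ ordered by minimal vertex (so $v_0\in c_0$), set $\mathcal F({\tt H})=M\otimes_R A^{\otimes_R k}$. For ${\tt H}\prec{\tt H}'={\tt H}\cup e$ (adding one edge): if $e$ joins distinct components $c_s\ni s(e)$ and $c_t\ni t(e)$, the map replaces the factors $a_s,a_t$ by $a_s\cdot a_t$ at position $\min(s,t)$ (the position of the merged component), other factors unchanged; if both endpoints of $e$ lie in one component (only possible when ${\tt H}'={\tt P}_n$), the map ${\tt d}_{{\tt H}\prec{\tt H}'}$ is the identity $M\to M$ while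 $\widehat{\tt d}_{{\tt H}\prec{\tt H}'}$ is zero. With a fixed edge order and $\zeta({\tt H},{\tt H}\cup e)$ = number of edges of ${\tt H}$ preceding $e$ mod 2: $C^i_{\rm Chrom}=\widehat C^i_{\rm Chrom}=\bigoplus_{\#E({\tt H})=i}\mathcal F({\tt H})$ over all spanning subgraphs, with differentials ${\tt d}=\sum(-1)^\zeta{\tt d}_{{\tt H}\prec{\tt H}'}$ and $\widehat{\tt d}=\sum(-1)^\zeta\widehat{\tt d}_{{\tt H}\prec{\tt H}'}$ (chromatic complexes of Helme-Guizon–Rong and Przytycki, in their orientation-dependent form). The multipath complex $C^i_\mu({\tt G};A,M)$ is the sum of $\mathcal F({\tt H})$ over multipaths ${\tt H}$ (spanning subgraphs whose components are isolated vertices or simple directed paths; for ${\tt I}_n$ all spanning subgraphs, for ${\tt P}_n$ all except ${\tt P}_n$) with $i$ edges and the same covering maps and signs (any sign assignment gives an isomorphic complex). *)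

(* Defs.v *)
From HB Require Import structures.
From mathcomp Require Import all_boot all_order all_algebra.
Set Implicit Arguments.
Unset Strict Implicit.
Unset Printing Implicit Defensive.
Import Order.TTheory GRing.Theory Num.Theory.
Local Open Scope ring_scope.

Section Defs.
Variables (R : comPzRingType) (A : algType R) (M : lmodType R).

Definition rlinear (U V : lmodType R) (f : U -> V) : Prop :=
  forall (r : R) (x y : U), f (r *: x + y) = r *: f x + f y.

Definition is_bimodule (la : A -> M -> M) (ra : M -> A -> M) : Prop :=
  (forall (r : R) a b m, la (r *: a + b) m = r *: la a m + la b m) /\
  (forall (r : R) a m m', la a (r *: m + m') = r *: la a m + la a m') /\
  (forall (r : R) m m' a, ra (r *: m + m') a = r *: ra m a + ra m' a) /\
  (forall (r : R) m a b, ra m (r *: a + b) = r *: ra m a + ra m b) /\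
  (forall a b m, la (a * b) m = la a (la b m)) /\
  (forall m a b, ra m (a * b) = ra (ra m a) b) /\
  (forall a m b, la a (ra m b) = ra (la a m) b) /\
  (forall m, la 1 m = m) /\ (forall m, ra m 1 = m).

Definition multilinear (N : lmodType R) (k : nat) (phi : M -> seq A -> N) : Prop :=
  (forall a, size a = k -> forall (r : R) m1 m2,
      phi (r *: m1 + m2) a = r *: phi m1 a + phi m2 a) /\
  (forall m a j, size a = k -> (j < k)%N -> forall (r : R) x y,
      phi m (set_nth 0 a j (r *: x + y))
      = r *: phi m (set_nth 0 a j x) + phi m (set_nth 0 a j y)).

(* The modules M (x)_R A^(x)_R k, k : nat, with their pure tensors
   m (x) a_1 (x) ... (x) a_k and a lifting operation for multilinear maps. *)
Record tensor_powers := TensorPowers {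
  tp : nat -> lmodType R;
  tp_pure : forall k, M -> seq A -> tp k;
  tp_lift : forall (k : nat) (N : lmodType R), (M -> seq A -> N) -> tp k -> N }.

Definition is_tensor_powers (T : tensor_powers) : Prop :=
  forall k : nat,
    multilinear k (@tp_pure T k) /\
    (forall (N : lmodType R) (phi : M -> seq A -> N), multilinear k phi ->
       rlinear (@tp_lift T k _ phi) /\
       (forall m a, size a = k -> @tp_lift T k _ phi (@tp_pure T k m a) = phi m a)) /\
    (forall (N : lmodType R) (f g : tp T k -> N), rlinear f -> rlinear g ->
       (forall m a, size a = k -> f (@tp_pure T k m a) = g (@tp_pure T k m a)) ->
       f = g).

Record complex := Complex {
  ctype : Type;
  czero : ctype;
  cadd : ctype -> ctype -> ctype;
  cscale : R -> ctype -> ctype;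
  cmem : nat -> ctype -> Prop;
  cdiff : ctype -> ctype }.        (* the differential, C^i -> C^(i+1) *)

Definition cplx_iso (C D : complex) : Prop :=
  exists phi : nat -> ctype C -> ctype D, forall i : nat,
    (forall x, @cmem C i x -> @cmem D i (phi i x)) /\
    (forall x y, @cmem C i x -> @cmem C i y ->
       phi i (cadd x y) = cadd (phi i x) (phi i y)) /\
    (forall (r : R) x, @cmem C i x -> phi i (cscale r x) = cscale r (phi i x)) /\
    (forall x y, @cmem C i x -> @cmem C i y -> phi i x = phi i y -> x = y) /\
    (forall y, @cmem D i y -> exists2 x, @cmem C i x & phi i x = y) /\
    (forall x, @cmem C i x -> phi i.+1 (cdiff x) = cdiff (phi i x)).

Definition csum (C D : complex) : complex :=
  @Complex (ctype C * ctype D)%type (czero C, czero D)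
    (fun x y => (cadd x.1 y.1, cadd x.2 y.2))
    (fun r x => (cscale r x.1, cscale r x.2))
    (fun i x => @cmem C i x.1 /\ @cmem D i x.2)
    (fun x => (cdiff x.1, cdiff x.2)).

(* the complex (M[j], 0): a single copy of M in degree j, zero differential *)
Definition conc (j : nat) : complex :=
  @Complex M 0 +%R ( *:%R) (fun i m => i <> j -> m = 0) (fun _ => 0).

Variables (nv ne : nat) (src tgt : 'I_ne -> 'I_nv).

Definition adj (H : {set 'I_ne}) : rel 'I_nv := fun x y =>
  [exists e in H, ((src e == x) && (tgt e == y)) || ((src e == y) && (tgt e == x))].
Definition conn (H : {set 'I_ne}) : rel 'I_nv := connect (adj H).
Definition isroot (H : {set 'I_ne}) (v : 'I_nv) : bool :=
  [forall u, conn H u v ==> (v <= u)%N].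
Definition ncomp (H : {set 'I_ne}) : nat := #|[set v | isroot H v]|.
(* index of the component of v, components ordered by minimal vertex *)
Definition cidx (H : {set 'I_ne}) (v : 'I_nv) : nat :=
  #|[set w | isroot H w & [forall u, conn H u v ==> (w < u)%N]]|.
(* number of A-factors: F(H) = M (x) A^(x) k with k+1 components *)
Definition kdeg (H : {set 'I_ne}) : nat := (ncomp H).-1.

(* multipaths: every component is an isolated vertex or a simple directed path,
   i.e. in/out-degrees at most 1 and no (undirected) cycle *)
Definition multipath (H : {set 'I_ne}) : bool :=
  [&& [forall v, #|[set e in H | src e == v]| <= 1]%N,
      [forall v, #|[set e in H | tgt e == v]| <= 1]%N &
      (#|H| + ncomp H == nv)%N].

Definition rem_at (a : seq A) (j : nat) : seq A := take j a ++ drop j.+1 a.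

Variables (la : A -> M -> M) (ra : M -> A -> M).

(* merge factors s and t (factor 0 is M, factor j >= 1 is the (j-1)-th entry of a)
   into a_s * a_t placed at position min(s,t) *)
Definition merge (m : M) (a : seq A) (s t : nat) : M * seq A :=
  if s == 0%N then (ra m (nth 0 a t.-1), rem_at a t.-1)
  else if t == 0%N then (la (nth 0 a s.-1) m, rem_at a s.-1)
  else (m, rem_at (set_nth 0 a (minn s t).-1 (nth 0 a s.-1 * nth 0 a t.-1))
                  (maxn s t).-1).

Variable T : tensor_powers.

Definition F (H : {set 'I_ne}) : lmodType R := tp T (kdeg H).

Definition covers (H H' : {set 'I_ne}) : bool :=
  (H \subset H') && (#|H' :\: H| == 1)%N.

(* the map d_{H < H'} (hat = false) or \hat d_{H < H'} (hat = true) *)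
Definition dmap (hat : bool) (H H' : {set 'I_ne}) : F H -> F H' :=
  match [pick e in H' :\: H] with
  | Some e =>
      if conn H (src e) (tgt e) then
        (if hat then (fun _ => 0)
         else @tp_lift T (kdeg H) _ (fun m a => @tp_pure T (kdeg H') m a))
      else @tp_lift T (kdeg H) _
             (fun m a => let ma := merge m a (cidx H (src e)) (cidx H (tgt e)) in
                         @tp_pure T (kdeg H') ma.1 ma.2)
  | None => fun _ => 0
  end.

Definition zsign (H H' : {set 'I_ne}) : R :=
  match [pick e in H' :\: H] with
  | Some e => (-1) ^+ #|[set f in H | (f < e)%N]|
  | None => 0
  end.

Definition cochains := forall H : {set 'I_ne}, F H.

(* the complex built on the spanning subgraphs satisfying P
   (P = predT: chromatic complexes; P = multipath: multipath complex) *)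
Definition graph_complex (P : pred {set 'I_ne}) (hat : bool) : complex :=
  @Complex cochains (fun H => 0)
    (fun x y H => x H + y H)
    (fun r x H => r *: x H)
    (fun i x => forall H, ~~ (P H && (#|H| == i)) -> x H = 0)
    (fun x H' => if P H' then
                   \sum_(H | covers H H') zsign H H' *: @dmap hat H H' (x H)
                 else 0).

End Defs.

(* The linear graph I_n and the polygon P_n: vertices v_0..v_n = 'I_n.+1 *)
Definition I_src (n : nat) (e : 'I_n) : 'I_n.+1 := inord e.
Definition I_tgt (n : nat) (e : 'I_n) : 'I_n.+1 := inord e.+1.
Definition P_src (n : nat) (e : 'I_n.+1) : 'I_n.+1 := e.
Definition P_tgt (n : nat) (e : 'I_n.+1) : 'I_n.+1 :=
  inord (if (e == n :> nat) then 0%N else e.+1).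

Definition chrom_complex R A M (n ne : nat) (src tgt : 'I_ne -> 'I_n.+1)
  la ra T (hat : bool) :=
  @graph_complex R A M n.+1 ne src tgt la ra T predT hat.
Definition multipath_complex R A M (n ne : nat) (src tgt : 'I_ne -> 'I_n.+1)
  la ra T :=
  @graph_complex R A M n.+1 ne src tgt la ra T (@multipath n.+1 ne src tgt) false.

(* Main.v *)
Require Import Defs.
From HB Require Import structures.
From mathcomp Require Import all_boot all_order all_algebra.
From mathcomp Require Import zify.
From Stdlib Require Import FunctionalExtensionality.
Set Implicit Arguments. Unset Strict Implicit. Unset Printing Implicit Defensive.
Section Graph.
Variables (nv ne : nat) (src tgt : 'I_ne -> 'I_nv).
Local Notation cn := (conn src tgt).
Local Notation ad := (adj src tgt).
Implicit Types (H : {set 'I_ne}) (e f : 'I_ne).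

Lemma adj_sym H : symmetric (ad H).
Proof.
move=> x y; apply/existsP/existsP => -[f /andP[fH hf]]; exists f;
  by rewrite fH orbC.
Qed.

Lemma conn_sym H x y : cn H x y = cn H y x.
Proof. exact: (sym_connect_sym (@adj_sym H)). Qed.

Lemma conn_trans H x y z : cn H x y -> cn H y z -> cn H x z.
Proof. exact: connect_trans. Qed.

Lemma conn_refl H x : cn H x x.
Proof. exact: connect0. Qed.

Lemma conn_edge H f : f \in H -> cn H (src f) (tgt f).
Proof. move=> fH; apply: connect1; apply/existsP; exists f; by rewrite fH !eqxx. Qed.

Lemma conn_sub H H' x y : H \subset H' -> cn H x y -> cn H' x y.
Proof.
move=> sHH'; apply: connect_sub => u v /existsP[f /andP[fH hf]].
apply: connect1; apply/existsP; exists f; by rewrite (subsetP sHH' _ fH).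
Qed.

Lemma conn_add H e x y : cn (e |: H) x y ->
  [|| cn H x y, cn H x (src e) && cn H (tgt e) y | cn H x (tgt e) && cn H (src e) y].
Proof.
set a := [pred z | [|| cn H x z, cn H x (src e) && cn H (tgt e) z
                     | cn H x (tgt e) && cn H (src e) z]].
have ax : x \in a by rewrite inE conn_refl.
move=> hxy; suff cl : closed (ad (e |: H)) a.
  by have := closed_connect cl hxy; rewrite ax => /esym h; exact: h.
have eqr : forall u v w, cn H v w -> cn H u v = cn H u w.
  move=> u v w hvw; apply/idP/idP => h; first exact: conn_trans h hvw.
  by apply: conn_trans h _; rewrite conn_sym.
have eql : forall u v w, cn H v w -> cn H v u = cn H w u.
  by move=> u v w hvw; rewrite conn_sym (eqr _ _ _ hvw) conn_sym.
move=> u v /existsP[f /andP[]]; rewrite in_setU1 => /orP[/eqP->|fH].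
  rewrite !inE => /orP[]/andP[/eqP<- /eqP<-]; rewrite !conn_refl /=;
  by case: (cn H x (src e)); case: (cn H x (tgt e)); rewrite ?andbF ?orbT ?orbF.
move=> huv0; have huv : cn H u v.
  move: huv0; case/orP=> /andP[/eqP<- /eqP<-]; first exact: conn_edge.
  by rewrite conn_sym; apply: conn_edge.
by rewrite !inE !(eqr _ _ _ huv).
Qed.

Lemma root_ex H v : exists r, isroot src tgt H r && cn H r v.
Proof.
have P0 : cn H v v by exact: conn_refl.
case: (@arg_minnP _ v (fun u => cn H u v) (fun u : 'I_nv => val u) P0) => r hr hmin.
exists r; rewrite hr andbT; apply/forallP => u; apply/implyP => hu.
by apply: hmin; apply: conn_trans hu hr.
Qed.

Lemma root_uniq H r1 r2 : isroot src tgt H r1 -> isroot src tgt H r2 ->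
  cn H r1 r2 -> r1 = r2.
Proof.
move=> /forallP h1 /forallP h2 c; apply: val_inj; apply/eqP; rewrite eqn_leq.
rewrite (implyP (h2 r1)) // (implyP (h1 r2)) //.
by rewrite conn_sym.
Qed.

Lemma root_min H r u : isroot src tgt H r -> cn H u r -> (r <= u)%N.
Proof. by move=> /forallP h c; apply: (implyP (h u)). Qed.

Lemma ncomp_add H e : ~~ cn H (src e) (tgt e) ->
  ncomp src tgt H = (ncomp src tgt (e |: H)).+1.
Proof.
move=> nst.
have [r1 /andP[rt1 c1]] := root_ex H (src e).
have [r2 /andP[rt2 c2]] := root_ex H (tgt e).
have r12 : r1 != r2.
  apply/eqP => E; subst r2; move/negP: nst; apply.
  by apply: conn_trans c2; rewrite conn_sym.
have c' : cn (e |: H) r1 r2.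
  apply: (conn_trans (y := src e)); first exact: conn_sub (subsetUr _ _) c1.
  apply: (conn_trans (y := tgt e)); first by apply: conn_edge; rewrite setU11.
  by rewrite conn_sym; apply: conn_sub (subsetUr _ _) c2.
pose m := if (r1 < r2)%N then r2 else r1.
have E : [set v | isroot src tgt (e |: H) v] = [set v | isroot src tgt H v] :\ m.
  apply/setP => v; rewrite !inE; apply/idP/andP.
  - move=> rv; have rvH : isroot src tgt H v.
      apply/forallP => u; apply/implyP => cu; apply: (root_min rv).
      exact: conn_sub (subsetUr _ _) cu.
    split=> //; apply/eqP => vm; move: rv; rewrite vm /m.
    case: ifP => lt12 rv.
      by have := root_min rv c'; rewrite leqNgt lt12.
    rewrite conn_sym in c'.
    have h1 := root_min rv c'.
    by move: lt12 r12; rewrite -val_eqE /=; lia.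
  - move=> [vm rv]; apply/forallP => u; apply/implyP => /conn_add.
    case/or3P => [cu|/andP[cs ct]|/andP[ct cs]]; first exact: root_min rv cu.
    + have vr2 : v = r2.
        apply: root_uniq rv rt2 _; apply: (conn_trans (y := tgt e)).
          by rewrite conn_sym.
        by rewrite conn_sym.
      have hu : (r1 <= u)%N.
        apply: (root_min rt1); apply: (conn_trans (y := src e)) => //.
        by rewrite conn_sym.
      move: vm; rewrite /m vr2; case: ifP => [_|]; first by rewrite eqxx.
      move=> h _; move: h hu; lia.
    + have vr1 : v = r1.
        apply: root_uniq rv rt1 _; apply: (conn_trans (y := src e)).
          by rewrite conn_sym.
        by rewrite conn_sym.
      have hu : (r2 <= u)%N.
        apply: (root_min rt2); apply: (conn_trans (y := tgt e)) => //.
        by rewrite conn_sym.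
      move: vm; rewrite /m vr1; case: ifP => [lt _|]; last by rewrite eqxx.
      move: lt hu; lia.
rewrite /ncomp E (cardsD1 m [set v | isroot src tgt H v]) inE.
have -> : isroot src tgt H m by rewrite /m; case: ifP.
by rewrite add1n.
Qed.

Lemma ncomp0 : ncomp src tgt set0 = nv.
Proof.
have r : forall v, isroot src tgt set0 v.
  move=> v; apply/forallP => u; apply/implyP => c.
  suff -> : u = v by [].
  have cl : closed (ad set0) (pred1 u).
    by move=> x y /existsP[f]; rewrite inE.
  by have := closed_connect cl c; rewrite inE eqxx => /esym/eqP.
rewrite /ncomp (_ : [set v | isroot src tgt set0 v] = setT) ?cardsT ?card_ord //.
by apply/setP => v; rewrite !inE r.
Qed.

Lemma count_forest (Q : pred {set 'I_ne}) :
  (forall H e, Q H -> Q (H :\ e)) ->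
  (forall H e, Q H -> e \in H -> ~~ cn (H :\ e) (src e) (tgt e)) ->
  forall H, Q H -> (#|H| + ncomp src tgt H = nv)%N.
Proof.
move=> Qd Qc H; have [k hk] : exists k, #|H| = k by eexists.
elim: k H hk => [|k IH] H hk QH.
  by move/eqP: hk; rewrite cards_eq0 => /eqP->; rewrite cards0 ncomp0.
have [e eH] : exists e, e \in H.
  by apply/set0Pn; rewrite -card_gt0 hk.
have := IH (H :\ e); rewrite (cardsD1 e H) eH add1n in hk.
case: hk => hk; move/(_ hk (Qd _ e QH)) => E; apply: etrans E.
rewrite (cardsD1 e H) eH (ncomp_add (Qc _ _ QH eH)) setD1K //.
by rewrite add1n addSnnS.
Qed.

Lemma card_inj_le1 (g : 'I_ne -> 'I_nv) H v : injective g ->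
  (#|[set e in H | g e == v]| <= 1)%N.
Proof.
move=> ig; apply/card_le1_eqP => x y; rewrite !inE => /andP[_ /eqP hx] /andP[_ /eqP hy].
by apply: ig; rewrite hx hy.
Qed.

End Graph.

Import GRing.Theory.
Local Open Scope ring_scope.

Lemma xxx0 (V : zmodType) (x : V) : x = x + x -> x = 0.
Proof. by move/(congr1 (fun z => z - x)); rewrite subrr addrK => ->. Qed.

Section Cplx.
Variables (R : comPzRingType) (A : algType R) (M : lmodType R).
Variables (la : A -> M -> M) (ra : M -> A -> M) (T : tensor_powers A M).
Variables (nv ne : nat) (src tgt : 'I_ne -> 'I_nv).
Implicit Types (H : {set 'I_ne}) (e f : 'I_ne).

Lemma dmap_eq hat1 hat2 H H' :
  (forall e, e \in H' :\: H -> ~~ conn src tgt H (src e) (tgt e)) ->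
  @dmap R A M nv ne src tgt la ra T hat1 H H' =1 @dmap R A M nv ne src tgt la ra T hat2 H H'.
Proof.
by move=> h; rewrite /dmap; case: pickP => [e He|//]; rewrite (negbTE (h e He)).
Qed.

Lemma dmap_hat0 H H' x :
  (forall e, e \in H' :\: H -> conn src tgt H (src e) (tgt e)) ->
  @dmap R A M nv ne src tgt la ra T true H H' x = 0.
Proof. by move=> h; rewrite /dmap; case: pickP => [e He|//]; rewrite (h e He). Qed.

Lemma graph_iso (P1 P2 : pred {set 'I_ne}) (hat1 hat2 : bool) : P1 =1 P2 ->
  (forall H H', covers H H' -> P2 H' -> forall e, e \in H' :\: H ->
      ~~ conn src tgt H (src e) (tgt e)) ->
  cplx_iso (graph_complex src tgt la ra T P1 hat1) (graph_complex src tgt la ra T P2 hat2).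
Proof.
move=> P12 hyp; exists (fun _ x => x) => i; (do !split) => //=.
- by move=> x hx H; rewrite -P12; apply: hx.
- by move=> y hy; exists y => // H; rewrite P12; apply: hy.
- move=> x _; apply: functional_extensionality_dep => H'.
  rewrite P12; case: ifP => // P2H; apply: eq_bigr => H cov.
  by congr (_ *: _); apply: dmap_eq; apply: hyp.
Qed.

Section Tensor0.
Hypothesis hT : is_tensor_powers T.

Lemma pure0_lin k : k = 0%N -> forall (r : R) m1 m2,
  tp_pure T k (r *: m1 + m2) [::] = r *: tp_pure T k m1 [::] + tp_pure T k m2 [::].
Proof. by move=> hk; case: (hT k) => [[h1 _] _]; apply: h1; rewrite hk. Qed.

Lemma pure0_0 k : k = 0%N -> tp_pure T k 0 [::] = 0.
Proof.
move=> hk; have := pure0_lin hk 1 0 0; rewrite !scale1r !addr0 => h; apply: xxx0; exact: h.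
Qed.

Lemma pure0_add k : k = 0%N -> forall m1 m2,
  tp_pure T k (m1 + m2) [::] = tp_pure T k m1 [::] + tp_pure T k m2 [::].
Proof. by move=> hk m1 m2; have := pure0_lin hk 1 m1 m2; rewrite !scale1r. Qed.

Lemma pure0_scale k : k = 0%N -> forall (r : R) m,
  tp_pure T k (r *: m) [::] = r *: tp_pure T k m [::].
Proof. by move=> hk r m; have := pure0_lin hk r m 0; rewrite !addr0 pure0_0 // addr0. Qed.

Definition lift0 k (y : tp T k) : M := @tp_lift _ _ _ T k M (fun (m : M) (a : seq A) => m) y.

Lemma ml_id0 k : k = 0%N -> multilinear k (fun (m : M) (a : seq A) => m).
Proof. by move=> hk; split => // m a j _; rewrite hk. Qed.

Lemma lift_pure0 k : k = 0%N -> forall m, lift0 (tp_pure T k m [::]) = m.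
Proof.
move=> hk m; case: (hT k) => _ [/(_ M _ (ml_id0 hk)) [_ h] _].
by rewrite /lift0 h // hk.
Qed.

Lemma lift0_lin k : k = 0%N -> rlinear (@lift0 k).
Proof. by move=> hk; case: (hT k) => _ [/(_ M _ (ml_id0 hk)) [h _] _]. Qed.

Lemma lift0_0 k : k = 0%N -> lift0 (0 : tp T k) = 0.
Proof.
move=> hk; have := lift0_lin hk 1 0 0; rewrite !scale1r !addr0 => h; apply: xxx0; exact: h.
Qed.

Lemma pure_lift0 k : k = 0%N -> forall y : tp T k, tp_pure T k (lift0 y) [::] = y.
Proof.
move=> hk y; case: (hT k) => _ [_ h].
suff E : (fun y : tp T k => tp_pure T k (lift0 y) [::]) = id.
  by move: (congr1 (fun g => g y) E).
apply: h => //.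
- by move=> r x z; rewrite (lift0_lin hk) pure0_lin.
- move=> m a sa; have a0 : a = [::] by apply: size0nil; rewrite sa hk.
  by rewrite a0 lift_pure0.
Qed.
End Tensor0.

Lemma cov_nT H H' : covers H H' -> H != setT.
Proof.
move=> /andP[_ /eqP c]; apply/eqP => E; move: c; rewrite E.
by rewrite (_ : H' :\: setT = set0) ?cards0 //; apply/setP => z; rewrite !inE.
Qed.

Lemma csum_iso : is_tensor_powers T ->
  (forall H, multipath src tgt H = (H != setT)) ->
  (forall H H', covers H H' -> H' != setT -> forall e, e \in H' :\: H ->
      ~~ conn src tgt H (src e) (tgt e)) ->
  (forall H, covers H setT -> forall e, e \in setT :\: H ->
      conn src tgt H (src e) (tgt e)) ->
  kdeg src tgt setT = 0%N ->
  cplx_iso (csum (graph_complex src tgt la ra T (multipath src tgt) false) (conc M ne))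
           (graph_complex src tgt la ra T predT true).
Proof.
move=> hT hmp h2 h3 hK.
pose phi := fun (_ : nat) (xm : cochains src tgt T * M) =>
  (fun H => xm.1 H + (if H == setT then tp_pure T (kdeg src tgt H) xm.2 [::] else 0))
  : cochains src tgt T.
have cT : #|[set: 'I_ne]| = ne by rewrite cardsT card_ord.
exists phi => i; rewrite /phi; do !split.
- move=> [x m] /= [hx hm] H; case: (H =P setT) => [->|nH] hH.
    rewrite hx ?hmp ?eqxx // hm ?pure0_0 ?addr0 //.
    by move=> ei; move: hH; rewrite /= cT ei eqxx.
  rewrite addr0; apply: hx; rewrite hmp (introF eqP nH) /=; exact: hH.
- move=> [x1 m1] [x2 m2] _ _ /=; apply: functional_extensionality_dep => H.
  case: eqP => [->|_]; last by rewrite !addr0.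
  by rewrite pure0_add // addrACA.
- move=> r [x m] _ /=; apply: functional_extensionality_dep => H.
  case: eqP => [->|_]; last by rewrite !addr0.
  by rewrite pure0_scale // scalerDr.
- move=> [x1 m1] [x2 m2] /= [h1 _] [h2' _] E.
  have x0 : forall x : cochains src tgt T,
      (forall H, ~~ (multipath src tgt H && (#|H| == i)) -> x H = 0) -> x setT = 0.
    by move=> x hx; apply: hx; rewrite hmp eqxx.
  have Es := congr1 (fun g => g setT) E; rewrite /= eqxx (x0 _ h1) (x0 _ h2') !add0r in Es.
  have m12 : m1 = m2.
    by rewrite -(lift_pure0 hT hK m1) -(lift_pure0 hT hK m2) Es.
  congr pair => //; apply: functional_extensionality_dep => H.
  case: (H =P setT) => [->|nH]; first by rewrite (x0 _ h1) (x0 _ h2').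
  by have := congr1 (fun g => g H) E; rewrite /= (introF eqP nH) !addr0.
- move=> y /= hy.
  exists ((fun H => if H == setT then 0 else y H), lift0 (y setT)).
    split.
      move=> H /=; case: (H =P setT) => // nH hH; apply: hy; rewrite /=.
      by move: hH; rewrite hmp (introF eqP nH).
    move=> ni; have -> : y setT = 0.
      by apply: hy; rewrite /= cT; apply/eqP => E; apply: ni; rewrite E.
    exact: lift0_0.
  apply: functional_extensionality_dep => H; rewrite /phi /=.
  case: eqP => [->|_]; last by rewrite addr0.
  by rewrite add0r pure_lift0.
- move=> [x m] _ /=; apply: functional_extensionality_dep => H'.
  rewrite (_ : (if H' == setT then _ else _) = 0); last first.
    by case: eqP => [->|//]; rewrite pure0_0.
  rewrite addr0.
  rewrite [in RHS](eq_bigr (fun H => zsign R H H' *: dmap la ra true H' (x H))); last first.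
    by move=> H cov; rewrite (negbTE (cov_nT cov)) addr0.
  case: (H' =P setT) => [->|nH'].
    rewrite hmp eqxx /=; symmetry; apply: big1 => H cov.
    by rewrite dmap_hat0 ?scaler0 //; apply: h3.
  rewrite hmp (introF eqP nH') /=; apply: eq_bigr => H cov; congr (_ *: _).
  by apply: dmap_eq => e; apply: h2 => //; apply/eqP.
Qed.
End Cplx.
Local Close Scope ring_scope.

Section IGraph.
Variable n : nat.
Local Notation src := (@I_src n).
Local Notation tgt := (@I_tgt n).
Implicit Types (H : {set 'I_n}) (e f : 'I_n).

Lemma I_src_val e : (src e : nat) = e.
Proof. by rewrite /I_src inordK //; have := ltn_ord e; lia. Qed.
Lemma I_tgt_val e : (tgt e : nat) = e.+1.
Proof. by rewrite /I_tgt inordK //; have := ltn_ord e; lia. Qed.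

Lemma I1 H e : e \notin H -> ~~ conn src tgt H (src e) (tgt e).
Proof.
move=> eH; apply/negP => c.
have cl : closed (adj src tgt H) [pred w : 'I_n.+1 | (w <= e)%N].
  move=> x y /existsP[f /andP[fH hf]].
  have fe : (f : nat) != e.
    by apply: contraNneq eH => /val_inj <-.
  move: hf => /orP[]/andP[/eqP<- /eqP<-]; rewrite !inE I_src_val I_tgt_val;
  by apply/idP/idP; move: fe; lia.
by have := closed_connect cl c; rewrite !inE I_src_val I_tgt_val leqnn ltnn.
Qed.

Lemma I_path H a b : (a <= b <= n)%N ->
  (forall j : 'I_n, (a <= j < b)%N -> j \in H) -> conn src tgt H (inord a) (inord b).
Proof.
elim: b => [|b IH] hab hj.
  have -> : a = 0 by move: hab; lia.
  exact: conn_refl.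

case: (a =P b.+1) => [->|nab]; first exact: conn_refl.
have bn : (b < n)%N by move: hab; lia.
apply: (conn_trans (y := inord b)).
  by apply: IH; [move: hab nab; lia | move=> j hj'; apply: hj; move: hj'; lia].
have := @conn_edge _ _ src tgt H (Ordinal bn); apply.
by apply: hj => /=; move: hab nab; lia.
Qed.

Lemma I_multipath H : multipath src tgt H.
Proof.
apply/and3P; split.
- apply/forallP => v; apply: card_inj_le1 => x y /(congr1 (@nat_of_ord _)).
  by rewrite !I_src_val => /val_inj.
- apply/forallP => v; apply: card_inj_le1 => x y /(congr1 (@nat_of_ord _)).
  by rewrite !I_tgt_val => -[] /val_inj.
- apply/eqP; apply: (count_forest (Q := predT)) => // H0 e _ eH.
  by apply: I1; rewrite !inE eqxx.
Qed.
End IGraph.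

Section PGraph.
Variable n : nat.
Local Notation src := (@P_src n).
Local Notation tgt := (@P_tgt n).
Implicit Types (H : {set 'I_n.+1}) (e f : 'I_n.+1).

Lemma P_tgt_val e : (tgt e : nat) = if (e : nat) == n then 0 else e.+1.
Proof.
rewrite /P_tgt inordK //; case: eqP => // ne; have := ltn_ord e; lia.
Qed.

Lemma P_path H a b : (a <= b <= n)%N ->
  (forall j : 'I_n.+1, (a <= j < b)%N -> j \in H) -> conn src tgt H (inord a) (inord b).
Proof.
elim: b => [|b IH] hab hj.
  have -> : a = 0 by move: hab; lia.
  exact: conn_refl.
case: (a =P b.+1) => [->|nab]; first exact: conn_refl.
have bn : (b < n)%N by move: hab; lia.
apply: (conn_trans (y := inord b)).
  by apply: IH; [move: hab nab; lia | move=> j hj'; apply: hj; move: hj'; lia].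
have jb : ((inord b : 'I_n.+1) : nat) = b by rewrite inordK //; lia.
have ht : tgt (inord b) = inord b.+1.
  by apply: val_inj; rewrite /= P_tgt_val jb (_ : (b == n) = false) ?inordK //; lia.
rewrite -ht; apply: (@conn_edge _ _ src tgt H (inord b)).
by apply: hj; rewrite jb; move: hab nab; lia.
Qed.

Lemma P1 H e f : e \notin H -> f \notin H -> f != e -> ~~ conn src tgt H (src e) (tgt e).
Proof.
move=> eH fH fe; apply/negP => c.
have fe' : (f : nat) != e by apply: contraNneq fe => /val_inj ->.
have he := ltn_ord e; have hf := ltn_ord f.
have cl : closed (adj src tgt H)
    [pred w : 'I_n.+1 | (minn e f < w)%N && (w <= maxn e f)%N].
  move=> x y /existsP[g /andP[gH hg]].
  have ge : (g : nat) != e by apply: contraNneq eH => /val_inj <-.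
  have gf : (g : nat) != f by apply: contraNneq fH => /val_inj <-.
  have hg' := ltn_ord g.
  have key : ((minn e f < g)%N && (g <= maxn e f)%N) =
             ((minn e f < tgt g)%N && (tgt g <= maxn e f)%N).
    rewrite P_tgt_val; case: eqP => hgn; apply/idP/idP;
      move: ge gf hg' he hf fe' hgn; lia.
  by move: hg => /orP[]/andP[/eqP<- /eqP<-]; rewrite !inE /P_src.
have := closed_connect cl c; rewrite !inE /P_src P_tgt_val.
by case: eqP => hen h; move: h he hf fe' hen; lia.
Qed.

Lemma inord_val' (v : 'I_n.+1) : inord (v : nat) = v.
Proof. exact: inord_val. Qed.

Lemma P2 H e : (forall f, f != e -> f \in H) -> conn src tgt H (src e) (tgt e).
Proof.
move=> hH; have he := ltn_ord e.
have se : src e = inord e by rewrite inord_val.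
case: (e =P n :> nat) => hen.
  have te : tgt e = inord 0 by apply: val_inj; rewrite /= P_tgt_val hen eqxx inordK.
  rewrite se te hen conn_sym; apply: P_path => [|j hj]; first by rewrite leqnn.
  by apply: hH; apply/eqP => E; move: hj; rewrite E hen; lia.
have te : tgt e = inord e.+1.
  by apply: val_inj; rewrite /= P_tgt_val (introF eqP hen) inordK //; lia.
rewrite se te conn_sym.
apply: (conn_trans (y := inord n)).
  apply: P_path => [|j hj]; first by apply/andP; split; lia.
  by apply: hH; apply/eqP => E; move: hj; rewrite E; lia.
apply: (conn_trans (y := inord 0)).
  have hs : src ord_max = inord n by rewrite -[LHS]inord_val.
  have ht : tgt ord_max = inord 0 by rewrite /P_tgt /= eqxx.
  rewrite -hs -ht; apply: conn_edge; apply: hH; apply/eqP => E.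
  by apply: hen; rewrite -E.
apply: P_path => [|j hj]; first by apply/andP; split; lia.
by apply: hH; apply/eqP => E; move: hj; rewrite E; lia.
Qed.

Lemma P_connT v : conn src tgt setT ord0 v.
Proof.
have h0 : (ord0 : 'I_n.+1) = inord 0 by apply: val_inj; rewrite /= inordK.
rewrite h0 -(inord_val v); apply: P_path => [|j _]; last by rewrite inE.
by apply/andP; split => //; have := ltn_ord v; lia.
Qed.

Lemma P_ncompT : ncomp src tgt setT = 1.
Proof.
rewrite /ncomp (_ : [set v | isroot src tgt setT v] = [set ord0]) ?cards1 //.
apply/setP => v; rewrite !inE; apply/idP/eqP => [rv|->].
  by apply: val_inj => /=; have := root_min rv (P_connT v); rewrite leqn0 => /eqP.
by apply/forallP => u; apply/implyP.
Qed.

Lemma P_multipath H : multipath src tgt H = (H != setT).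
Proof.
case: (H =P setT) => [->|nH] /=.
  apply/negbTE/negP => /and3P[_ _ /eqP]; rewrite cardsT card_ord P_ncompT; lia.
apply/and3P; split.
- apply/forallP => v; apply: card_inj_le1 => x y. exact.
- apply/forallP => v; apply: card_inj_le1 => x y /(congr1 (@nat_of_ord _)).
  rewrite !P_tgt_val => h; apply: val_inj => /=; move: h (ltn_ord x) (ltn_ord y).
  by case: (x =P n :> nat); case: (y =P n :> nat); lia.
- apply/eqP; apply: (count_forest (Q := fun H => H != setT)) => [H0 e|H0 e|].
  + move=> nH0; apply/eqP => E; have : e \in H0 :\ e by rewrite E inE.
    by rewrite !inE eqxx.
  + move=> nH0 eH0.
    have [f _ fH] : exists2 f, f \in setT & f \notin H0.
      apply/subsetPn; apply: contra nH0 => s; by rewrite eqEsubset subsetT.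
    apply: (P1 (f := f)); rewrite ?inE ?eqxx //.
      by rewrite (negbTE fH) andbF.
    by apply: contraNneq fH => ->.
  + by apply/eqP.
Qed.
End PGraph.

Theorem theorem6p4 (R : comPzRingType) (A : algType R) (M : lmodType R)
  (la : A -> M -> M) (ra : M -> A -> M) (T : tensor_powers A M) (n : nat) :
  is_bimodule la ra -> is_tensor_powers T ->
  [/\ cplx_iso (multipath_complex (@I_src n) (@I_tgt n) la ra T)
               (chrom_complex (@I_src n) (@I_tgt n) la ra T true),
      cplx_iso (chrom_complex (@I_src n) (@I_tgt n) la ra T true)
               (chrom_complex (@I_src n) (@I_tgt n) la ra T false) &
      cplx_iso (csum (multipath_complex (@P_src n) (@P_tgt n) la ra T)
                     (conc M n.+1))
               (chrom_complex (@P_src n) (@P_tgt n) la ra T true)].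
Proof.
move=> _ hT; split.
- apply: graph_iso => [H|H H' _ _ e]; first by rewrite I_multipath.
  by rewrite inE => /andP[eH _]; apply: I1.
- apply: graph_iso => // H H' _ _ e.
  by rewrite inE => /andP[eH _]; apply: I1.
- apply: csum_iso => //.
  + exact: P_multipath.
  + move=> H H' /andP[sHH' _] nH' e; rewrite inE => /andP[eH eH'].
    have [f _ fH'] : exists2 f, f \in setT & f \notin H'.
      apply/subsetPn; apply: contra nH' => s; by rewrite eqEsubset subsetT.
    apply: (P1 (f := f)) => //.
      by apply: contra fH'; apply: (subsetP sHH').
    by apply: contraNneq fH' => ->.
  + move=> H /andP[_ /eqP c1] e eH; apply: P2 => f fe.
    apply/negPn/negP => fH.
    have fin : f \in setT :\: H by rewrite !inE fH.
    have : #|setT :\: H| <= 1 by rewrite c1.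
    move/card_le1_eqP => h; have E := h f e fin eH.
    by rewrite E eqxx in fe.
  + by rewrite /kdeg P_ncompT.
Qed.
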